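(* For every $n\in\mathbb{N}$, every formula $\varphi$ of $\mathbf{CPN}_n$ whose propositional letters are among $p_1,\dots,p_m$, and every valuation $\mathcal V$: $\;p_1^{\mathcal V},\dots,p_m^{\mathcal V}\vdash_{(n)}\varphi^{\mathcal V}$.
   Context: Fix $n\in\mathbb{N}$, $n\ge 1$, and write $[n]=\{1,\dots,n\}$. Chains: a chain over $[n]$ is a finite sequence of distinct elements of $[n]$; chains with the same length and the same symbols are identified, so a chain is effectively a subset of $[n]$. $c_k$ denotes a chain with $k$ symbols, $\epsilon$ the empty chain, and $(n)$ the chain consisting of all symbols of $[n]$. For chains $c,d$: the concatenation $c\cdot d$ is the chain of symbols occurring in $c$ or in $d$; the coconcatenation $c\otimes d$ is the chain of symbols occurring in exactly one of $c,d$; $d$ is a subchain of $c$ if every symbol of $d$ is a symbol of $c$. The complementary chain $c'_{n-k}$ of $c_k$ is the chain of the symbols of $[n]$ not occurring in $c_k$. Language of $\mathbf{CPN}_n$: a countable set $P_n$ of propositional letters; constants $\perp_c$ for each chain $c$ over $[n]$ with $1\le |c|\le n-1$, and constants $\perp_{(n)}$ (contradiction) and $\top_{(n)}$ (truth); a unary connective $\neg_c$ for each nonempty chain $c$ over $[n]$ ($\neg_{(n)}$ is the strong negation; the $\neg_c$ with $|c|\le n-1$ are weak negations); a binary connective $\to_{(n)}$. Formulas: propositional letters and constants are formulas; if $\varphi,\psi$ are formulas then so are $\neg_c\varphi$ and $(\varphi\to_{(n)}\psi)$. Conventions: $\neg_\epsilon\varphi:=\varphi$, $\perp_\epsilon:=\top_{(n)}$,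 and $\perp_c$ for $c=(n)$ means $\perp_{(n)}$. Abbreviations: $\varphi\wedge_{(n)}\psi:=\neg_{(n)}(\varphi\to_{(n)}\neg_{(n)}\psi)$, $\varphi\vee_{(n)}\psi:=\neg_{(n)}\varphi\to_{(n)}\psi$, $\varphi\leftrightarrow_{(n)}\psi:=(\varphi\to_{(n)}\psi)\wedge_{(n)}(\psi\to_{(n)}\varphi)$. Axioms of $\mathbf{CPN}_n$, for all formulas $\varphi,\psi,\chi$ and all nonempty chains $c_k,c_r$ over $[n]$: (A1) $\varphi\to_{(n)}(\psi\to_{(n)}\varphi)$; (A2) $(\varphi\to_{(n)}(\psi\to_{(n)}\chi))\to_{(n)}((\varphi\to_{(n)}\psi)\to_{(n)}(\varphi\to_{(n)}\chi))$; (A3) $(\neg_{(n)}\psi\to_{(n)}\neg_{(n)}\varphi)\to_{(n)}((\neg_{(n)}\psi\to_{(n)}\varphi)\to_{(n)}\psi)$; (A4) $\varphi\to_{(n)}(\perp_{c_k}\to_{(n)}\neg_{c_k}\varphi)$; (A5) $\neg_{c_k}\neg_{c_r}\varphi\leftrightarrow_{(n)}\neg_{c_k\otimes c_r}\varphi$; (A6) $\neg_{c_k}\perp_{c_r}\leftrightarrow_{(n)}\perp_{c_k\otimes c_r}$; (A7) $\perp_{c_k}\to_{(n)}\perp_{c_r}$, whenever $c_r$ is a subchain of $c_k$. The only rule of inference is modus ponens (from $\varphi$ and $\varphi\to_{(n)}\psi$ infer $\psi$). For a set $\Sigma$ of formulas, $\Sigma\vdash_{(n)}\varphi$ means there is a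 finite sequence of formulas ending with $\varphi$, each of which is an axiom, a member of $\Sigma$, or obtained from two earlier members by modus ponens; $\vdash_{(n)}\varphi$ means $\emptyset\vdash_{(n)}\varphi$. Semantics: for each $i\in[n]$ there is a world $\mathcal M_i=\{T_i,F_i\}$ (pairwise disjoint sets). A valuation $\mathcal V$ assigns to each propositional letter $p$ and each $i\in[n]$ a value $v_i(p)\in\mathcal M_i$ (independently for different $i$). It extends to all formulas, for each $i$, by: $\bar v_i(p)=v_i(p)$ for letters; $\bar v_i(\perp_c)=F_i$ if $i$ is a symbol of $c$ and $T_i$ otherwise (so $\bar v_i(\perp_{(n)})=F_i$ and $\bar v_i(\top_{(n)})=T_i$); $\bar v_i(\neg_c\varphi)=\bar v_i(\varphi)$ if $i$ is not a symbol of $c$, and the opposite value ($T_i\leftrightarrow F_i$) if $i$ is a symbol of $c$; $\bar v_i(\varphi\to_{(n)}\psi)=F_i$ iff $\bar v_i(\varphi)=T_i$ and $\bar v_i(\psi)=F_i$, otherwise $T_i$ (hence $\wedge_{(n)},\vee_{(n)}$ behave classically in each world). Write $\bar{\mathcal V}(\varphi)=(\bar v_1(\varphi),\dots,\bar v_n(\varphi))$. A formula $\varphi$ is a tautology, written $\models_{(n)}\varphi$, iff $\bar{\mathcal V}(\varphi)=(T_1,\dots,T_n)$ for every valuation $\mathcal V$. Given a valuation $\mathcal V$ and a chain $c$ over $[n]$ (possibly empty), a formula $\varphi$ is $c$-contingent (under $\mathcal V$) if $\bar v_i(\varphi)=F_i$ for every symbol $i$ of $c$ and $\bar v_i(\varphi)=T_i$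 for every $i\in[n]$ not in $c$. Every formula is $c$-contingent for exactly one chain $c$, and one sets $\varphi^{\mathcal V}:=\neg_c\varphi$ for that $c$ (so $\varphi^{\mathcal V}=\varphi$ when $\bar{\mathcal V}(\varphi)=(T_1,\dots,T_n)$). *)

(* Defs.v *)
From mathcomp Require Import all_boot.
Set Implicit Arguments. Unset Strict Implicit. Unset Printing Implicit Defensive.

(* Chains over [n] are subsets of 'I_n (symbol i+1 of [n] is the ordinal i). *)
Definition chain (n : nat) := {set 'I_n}.

Definition cocat n (c d : chain n) : chain n := (c :\: d) :|: (d :\: c).

(* Propositional letters are indexed by nat.
   [Bot c] is the constant perp_c; by the paper's conventions
   [Bot set0] is top_(n) and [Bot setT] is perp_(n).
   [Neg c _ f] is neg_c f, only for nonempty chains c. *)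
Inductive formula (n : nat) : Type :=
| Var of nat
| Bot of chain n
| Neg (c : chain n) (hc : c != set0) (f : formula n)
| Imp of formula n & formula n.

Arguments Var {n}.

(* neg_c with the convention neg_eps f := f *)
Definition neg n (c : chain n) (f : formula n) : formula n :=
  (if c != set0 as b return (c != set0) = b -> formula n
   then fun h => Neg h f else fun _ => f) erefl.

Definition snot n (f : formula n) := neg setT f.
Definition conj n (f g : formula n) := snot (Imp f (snot g)).
Definition disj n (f g : formula n) := Imp (snot f) g.
Definition iff n (f g : formula n) := conj (Imp f g) (Imp g f).

Fixpoint letters n (f : formula n) : seq nat :=
  match f with
  | Var p => [:: p]
  | Bot _ => [::]
  | Neg _ _ g => letters g
  | Imp g h => letters g ++ letters h
  end.

Inductive axiom (n : nat) : formula n -> Prop :=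
| A1 (f g : formula n) : axiom (Imp f (Imp g f))
| A2 (f g h : formula n) :
    axiom (Imp (Imp f (Imp g h)) (Imp (Imp f g) (Imp f h)))
| A3 (f g : formula n) :
    axiom (Imp (Imp (snot g) (snot f)) (Imp (Imp (snot g) f) g))
| A4 (f : formula n) (c : chain n) : c != set0 ->
    axiom (Imp f (Imp (Bot c) (neg c f)))
| A5 (f : formula n) (c r : chain n) : c != set0 -> r != set0 ->
    axiom (iff (neg c (neg r f)) (neg (cocat c r) f))
| A6 (c r : chain n) : c != set0 -> r != set0 ->
    axiom (iff (neg c (Bot r)) (Bot (cocat c r)))
| A7 (c r : chain n) : c != set0 -> r != set0 -> r \subset c ->
    axiom (Imp (Bot c) (Bot r)).

(* Derivability from a set of hypotheses Sigma, modus ponens only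
   (inductive closure; equivalent to existence of a finite derivation). *)
Inductive derivable (n : nat) (Sigma : formula n -> Prop) : formula n -> Prop :=
| d_hyp f : Sigma f -> derivable Sigma f
| d_ax f : axiom f -> derivable Sigma f
| d_mp f g : derivable Sigma f -> derivable Sigma (Imp f g) -> derivable Sigma g.

(* Semantics: world i has values T_i = true, F_i = false. *)
Definition valuation (n : nat) := nat -> 'I_n -> bool.

Fixpoint eval n (v : valuation n) (f : formula n) (i : 'I_n) : bool :=
  match f with
  | Var p => v p i
  | Bot c => i \notin c
  | Neg c _ g => if i \in c then ~~ eval v g i else eval v g i
  | Imp g h => eval v g i ==> eval v h i
  end.

(* The unique chain c such that f is c-contingent under v *)
Definition contingency n (v : valuation n) (f : formula n) : chain n :=
  [set i | ~~ eval v f i].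

(* f^V := neg_c f, where f is c-contingent under v *)
Definition vform n (v : valuation n) (f : formula n) : formula n :=
  neg (contingency v f) f.

(* Main.v *)
Require Import Defs.
From mathcomp Require Import all_boot.
Set Implicit Arguments. Unset Strict Implicit. Unset Printing Implicit Defensive.

Definition Ext n (G : formula n -> Prop) (A : formula n) := fun x => G x \/ x = A.

Lemma weak n (G D : formula n -> Prop) f :
  (forall x, G x -> D x) -> derivable G f -> derivable D f.
Proof.
move=> H; elim=> [x /H|x|x y _ IH1 _ IH2]; [exact: d_hyp|exact: d_ax|exact: d_mp IH1 IH2].
Qed.

Ltac lift H := apply: (weak _ H); move=> ? ?; do ?left; assumption.
Ltac hy := apply: d_hyp; rewrite /Ext; do ?(first [solve [right; reflexivity] | left]).

Lemma mp n (G : formula n -> Prop) f g :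
  derivable G f -> derivable G (Imp f g) -> derivable G g.
Proof. exact: d_mp. Qed.

Lemma ax1 n G (f g : formula n) : derivable G (Imp f (Imp g f)).
Proof. apply: d_ax; constructor. Qed.
Lemma ax2 n G (f g h : formula n) :
  derivable G (Imp (Imp f (Imp g h)) (Imp (Imp f g) (Imp f h))).
Proof. apply: d_ax; constructor. Qed.
Lemma ax3 n G (f g : formula n) :
  derivable G (Imp (Imp (snot g) (snot f)) (Imp (Imp (snot g) f) g)).
Proof. apply: d_ax; constructor. Qed.

Lemma idI n G (f : formula n) : derivable G (Imp f f).
Proof.
have h3 := mp (ax1 G f (Imp f f)) (ax2 G f (Imp f f) f).
exact: mp (ax1 G f f) h3.
Qed.

Lemma ded n (G : formula n -> Prop) A B :
  derivable (Ext G A) B -> derivable G (Imp A B).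
Proof.
elim=> [x [Hx|->]|x Hx|x y _ IH1 _ IH2].
- exact: mp (d_hyp Hx) (ax1 _ _ _).
- exact: idI.
- exact: mp (d_ax _ Hx) (ax1 _ _ _).
- exact: mp IH1 (mp IH2 (ax2 _ _ _ _)).
Qed.

Lemma wk n (G : formula n -> Prop) A B : derivable G B -> derivable (Ext G A) B.
Proof. by move=> H; lift H. Qed.

Lemma raa n (G : formula n -> Prop) A X :
  derivable (Ext G (snot A)) X -> derivable (Ext G (snot A)) (snot X) ->
  derivable G A.
Proof.
move=> /ded H1 /ded H2; exact: mp H1 (mp H2 (ax3 _ _ _)).
Qed.

Lemma efq n (G : formula n -> Prop) A B :
  derivable G A -> derivable G (snot A) -> derivable G B.
Proof. move=> H1 H2; apply: (raa (X := A)); exact: wk. Qed.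

Lemma dne n (G : formula n -> Prop) A :
  derivable G (snot (snot A)) -> derivable G A.
Proof. move=> H; apply: (raa (X := snot A)); [hy | exact: wk]. Qed.

Lemma cases n (G : formula n -> Prop) A B :
  derivable (Ext G A) B -> derivable (Ext G (snot A)) B -> derivable G B.
Proof.
move=> /ded H1 /ded H2; apply: (raa (X := B)); last by hy.
apply: mp (wk _ H2).
apply: (raa (X := B)); last by hy.
apply: mp (dne _) _; first by hy.
lift H1.
Qed.

Lemma conjI n (G : formula n -> Prop) f g :
  derivable G f -> derivable G g -> derivable G (conj f g).
Proof.
move=> Hf Hg; apply: (raa (X := g)); first exact: wk.
apply: mp (wk _ Hf) (dne _); hy.
Qed.

Lemma conjE1 n (G : formula n -> Prop) f g : derivable G (conj f g) -> derivable G f.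
Proof.
move=> H; apply: (raa (X := Imp f (snot g))); last exact: wk.
apply: ded; apply: efq; hy.
Qed.

Lemma conjE2 n (G : formula n -> Prop) f g : derivable G (conj f g) -> derivable G g.
Proof.
move=> H; apply: (raa (X := Imp f (snot g))); last exact: wk.
apply: ded; hy.
Qed.

Lemma iffE1 n (G : formula n -> Prop) f g : derivable G (iff f g) -> derivable G f -> derivable G g.
Proof. by move=> /conjE1 H Hf; apply: mp Hf H. Qed.
Lemma iffE2 n (G : formula n -> Prop) f g : derivable G (iff f g) -> derivable G g -> derivable G f.
Proof. by move=> /conjE2 H Hf; apply: mp Hf H. Qed.

Lemma negN n (c : chain n) (hc : c != set0) f : neg c f = Neg hc f.
Proof.
have: forall b (e : (c != set0) = b),
  (if b as b' return ((c != set0) = b' -> formula n)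
   then fun h => Neg h f else fun _ => f) e = Neg hc f.
  case=> e; first by rewrite (eq_irrelevance e hc).
  exfalso; by move: hc; rewrite e.
by move=> H; exact: (H _ erefl).
Qed.

Lemma neg0 n f : neg (set0 : chain n) f = f.
Proof.
have: forall b (e : ((set0 : chain n) != set0) = b),
  (if b as b' return (((set0 : chain n) != set0) = b' -> formula n)
   then fun h => Neg h f else fun _ => f) e = f.
  case=> e //; exfalso; by move: e; rewrite eqxx.
by move=> H; exact: (H _ erefl).
Qed.

Ltac setsolve := apply/setP=> i; rewrite /cocat !inE; by do ! case: (_ \in _).

Lemma cocatxx n (c : chain n) : cocat c c = set0. Proof. setsolve. Qed.
Lemma cocat0x n (c : chain n) : cocat set0 c = c. Proof. setsolve. Qed.
Lemma cocatx0 n (c : chain n) : cocat c set0 = c. Proof. setsolve. Qed.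
Lemma cocatK n (d c : chain n) : cocat (cocat d c) c = d. Proof. setsolve. Qed.
Lemma cocatTx n (c : chain n) : cocat setT c = ~: c. Proof. setsolve. Qed.
Lemma cocatCx n (c : chain n) : cocat (~: c) c = setT. Proof. setsolve. Qed.
Lemma cocatCT n (c : chain n) : cocat (~: c) setT = c. Proof. setsolve. Qed.
Lemma cocatD n (x y : chain n) : cocat y (x :\: y) = x :|: y. Proof. setsolve. Qed.
Lemma setE1 n (a b : chain n) : a :|: ~: b = ~: (~: a :&: b). Proof. setsolve. Qed.

Lemma setT_nz n (hn : 0 < n) : (setT : chain n) != set0.
Proof. apply/set0Pn; exists (Ordinal hn); by rewrite inE. Qed.

Lemma A4' n (G : formula n -> Prop) (c : chain n) f :
  derivable G f -> derivable G (Bot c) -> derivable G (neg c f).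
Proof.
case: (eqVneq c set0) => [->|hc] Hf Hb; first by rewrite neg0.
exact: mp Hb (mp Hf (d_ax _ (A4 f hc))).
Qed.

Lemma nn1 n (G : formula n -> Prop) (c r : chain n) f :
  derivable G (neg c (neg r f)) -> derivable G (neg (cocat c r) f).
Proof.
case: (eqVneq c set0) => [->|hc]; first by rewrite neg0 cocat0x.
case: (eqVneq r set0) => [->|hr]; first by rewrite neg0 cocatx0.
by move=> H; apply: iffE1 H; apply: d_ax; apply: A5.
Qed.

Lemma nn2 n (G : formula n -> Prop) (c r : chain n) f :
  derivable G (neg (cocat c r) f) -> derivable G (neg c (neg r f)).
Proof.
case: (eqVneq c set0) => [->|hc]; first by rewrite neg0 cocat0x.
case: (eqVneq r set0) => [->|hr]; first by rewrite neg0 cocatx0.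
by move=> H; apply: iffE2 H; apply: d_ax; apply: A5.
Qed.

Lemma T0 n (hn : 0 < n) (G : formula n -> Prop) :
  derivable G (snot (Bot (setT : chain n))).
Proof.
apply: (cases (A := Bot setT)); last by hy.
apply: A4'; hy.
Qed.

Lemma T1 n (hn : 0 < n) (G : formula n -> Prop) : derivable G (Bot (set0 : chain n)).
Proof.
have := d_ax G (A6 (setT_nz hn) (setT_nz hn)); rewrite cocatxx => /iffE1; apply.
exact: T0.
Qed.

Lemma F3a n (hn : 0 < n) (G : formula n -> Prop) (c : chain n) :
  derivable G (snot (Bot c)) -> derivable G (Bot (~: c)).
Proof.
case: (eqVneq c set0) => [->|hc] H; first by apply: efq H; exact: T1.
have := d_ax G (A6 (setT_nz hn) hc); rewrite cocatTx => /iffE1; apply; exact: H.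
Qed.

Lemma F3a' n (hn : 0 < n) (G : formula n -> Prop) (c : chain n) :
  derivable G (snot (Bot (~: c))) -> derivable G (Bot c).
Proof. by move/(F3a hn); rewrite setCK. Qed.

Lemma F3b n (hn : 0 < n) (G : formula n -> Prop) (c : chain n) :
  derivable G (Bot (~: c)) -> derivable G (snot (Bot c)).
Proof.
case: (eqVneq c set0) => [->|hc] H.
  by apply: efq (T0 hn G); rewrite -setC0.
have := d_ax G (A6 (setT_nz hn) hc); rewrite cocatTx => /iffE2; apply; exact: H.
Qed.

Lemma F4 n (hn : 0 < n) (G : formula n -> Prop) (x y : chain n) :
  y \subset x -> derivable G (Bot x) -> derivable G (Bot y).
Proof.
move=> hxy H.
case: (eqVneq y set0) => [->|hy]; first exact: T1.
case: (eqVneq x set0) => [x0|hx].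
  by move: hxy; rewrite x0 subset0 => /eqP y0; move: hy; rewrite y0 eqxx.
exact: mp H (d_ax _ (A7 hx hy hxy)).
Qed.

Lemma F5 n (hn : 0 < n) (G : formula n -> Prop) (x y : chain n) :
  derivable G (Bot x) -> derivable G (Bot y) -> derivable G (Bot (x :|: y)).
Proof.
move=> Hx Hy.
case: (eqVneq y set0) => [->|hy]; first by rewrite setU0.
case: (eqVneq (x :\: y) set0) => [/eqP|hz].
  by rewrite setD_eq0 => /setUidPr ->.
have Hz : derivable G (Bot (x :\: y)) by apply: F4 Hx; rewrite // subsetDl.
have := d_ax G (A6 hy hz); rewrite cocatD => /iffE1; apply.
exact: A4'.
Qed.

Lemma hypE n (G : formula n -> Prop) A : derivable (Ext G A) A.
Proof. hy. Qed.

Lemma neg_elim1 n (G : formula n -> Prop) (c : chain n) f :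
  derivable G (neg c f) -> derivable G (Imp (Bot c) f).
Proof.
move=> H; apply: ded; have := nn1 (A4' (wk (Bot c) H) (hypE G (Bot c))).
by rewrite cocatxx neg0.
Qed.

Lemma neg_elim2 n (G : formula n -> Prop) (c : chain n) f :
  derivable G (neg c f) -> derivable G (Imp (Bot (~: c)) (snot f)).
Proof.
move=> H; apply: ded; have := nn1 (A4' (wk (Bot (~: c)) H) (hypE G (Bot (~: c)))).
by rewrite cocatCx.
Qed.

Lemma neg_intro n (hn : 0 < n) (G : formula n -> Prop) (c : chain n) f :
  derivable G (Imp (Bot c) f) -> derivable G (Imp (Bot (~: c)) (snot f)) ->
  derivable G (neg c f).
Proof.
move=> H1 H2; apply: (cases (A := Bot c)).
  apply: A4'; last by hy.
  apply: mp (wk _ H1); hy.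
have Hb : derivable (Ext G (snot (Bot c))) (Bot (~: c)) by apply: (F3a hn); hy.
have Hn := mp Hb (wk _ H2).
have := nn1 (A4' Hn Hb); by rewrite cocatCT.
Qed.

Lemma contBot n (v : valuation n) c : contingency v (Bot c) = c.
Proof. apply/setP=> i; by rewrite inE /= negbK. Qed.

Lemma contNeg n (v : valuation n) c (hc : c != set0) g :
  contingency v (Neg hc g) = cocat (contingency v g) c.
Proof.
apply/setP=> i; rewrite /cocat !inE /=; by case: (i \in c); case: (eval v g i).
Qed.

Lemma contImp n (v : valuation n) g h :
  contingency v (Imp g h) = ~: contingency v g :&: contingency v h.
Proof.
apply/setP=> i; rewrite !inE /=; by case: (eval v g i); case: (eval v h i).
Qed.

Lemma key n (hn : 0 < n) (G : formula n -> Prop) (v : valuation n) phi :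
  (forall p, p \in letters phi -> G (vform v (Var p))) ->
  derivable G (vform v phi).
Proof.
elim: phi => [p|c|c hc g IH|g IHg h IHh] /= H.
- by apply: d_hyp; apply: H; rewrite inE.
- rewrite /vform contBot.
  case: (eqVneq c set0) => [->|hc]; first by rewrite neg0; exact: T1.
  have := d_ax G (A6 hc hc); rewrite cocatxx => /iffE2; apply; exact: T1.
- rewrite /vform contNeg -(negN hc); apply: nn2; rewrite cocatK; exact: IH.
- have Hg : derivable G (vform v g).
    by apply: IHg => p hp; apply: H; rewrite mem_cat hp.
  have Hh : derivable G (vform v h).
    by apply: IHh => p hp; apply: H; rewrite mem_cat hp orbT.
  rewrite /vform in Hg Hh *; rewrite contImp.
  set a := contingency v g in Hg *; set b := contingency v h in Hh *.
  apply: neg_intro => //.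
  + apply: ded; apply: ded.
    apply: (cases (A := Bot b)).
      apply: mp (_ : derivable _ (Bot b)) _; first by hy.
      lift (neg_elim1 Hh).
    match goal with |- derivable ?C _ => have Hnb : derivable C (Bot (~: b)) by apply: (F3a hn); hy end.
    match goal with |- derivable ?C _ => have Hnh : derivable C (snot h) by apply: mp Hnb _; lift (neg_elim2 Hh) end.
    apply: (cases (A := Bot (~: a))).
      apply: efq (_ : derivable _ (snot g)); first by hy.
      apply: mp (_ : derivable _ (Bot (~: a))) _; first by hy.
      lift (neg_elim2 Hg).
    match goal with |- derivable ?C _ => have Ha : derivable C (Bot a) by apply: (F3a' hn); hy end.
    have Hab := F5 hn Ha (wk _ Hnb).
    rewrite setE1 in Hab.
    apply: efq (F3b hn Hab); hy.
  + rewrite setCI setCK; apply: ded.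
    match goal with |- derivable ?C _ => have H1 : derivable C (Bot a) by apply: (F4 hn (subsetUl _ _)); hy end.
    match goal with |- derivable ?C _ => have H2 : derivable C (Bot (~: b)) by apply: (F4 hn (subsetUr _ _)); hy end.
    match goal with |- derivable ?C _ => have Hg' : derivable C g by apply: mp H1 _; lift (neg_elim1 Hg) end.
    match goal with |- derivable ?C _ => have Hh' : derivable C (snot h) by apply: mp H2 _; lift (neg_elim2 Hh) end.
    apply: (raa (X := h)); last exact: wk.
    apply: mp (wk _ Hg') (dne _); hy.
Qed.

Theorem mainTheorem14 (n : nat) (hn : 0 < n) (ps : seq nat) (phi : formula n)
    (hphi : {subset letters phi <= ps}) (v : valuation n) :
  derivable (fun psi => exists2 p, p \in ps & psi = vform v (Var p))
            (vform v phi).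
Proof.
apply: key => // p hp; exists p => //; exact: hphi.
Qed.
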